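(* Let $G$ be a totally bounded Abelian topological group with property $\mathfrak{h}$. Then $G$ has no infinite compact subsets.
   Context: $\mathbb{T}$ is the circle group. A subgroup $N$ of a topological Abelian group $G$ is $h$-embedded in $G$ if every group homomorphism $N\to\mathbb{T}$ extends to a continuous homomorphism $G\to\mathbb{T}$. $G$ has property $\mathfrak{h}$ if every countable subgroup of $G$ is $h$-embedded in $G$. *)

(* Defs.v *)
From HB Require Import structures.
From mathcomp Require Import all_boot all_order all_algebra.
From mathcomp Require Import all_classical all_reals all_analysis.
Set Implicit Arguments. Unset Strict Implicit. Unset Printing Implicit Defensive.
Import Order.TTheory GRing.Theory Num.Theory.
Import numFieldNormedType.Exports.
Local Open Scope classical_set_scope.
Local Open Scope ring_scope.

(* The circle group T is modelled as the unit circle in R^2 = C,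
   i.e. pairs (a, b) with a^2 + b^2 = 1, with complex multiplication. *)
Definition on_circle (R : realType) (z : R * R) : Prop :=
  z.1 ^+ 2 + z.2 ^+ 2 = 1.

Definition cmul (R : realType) (z w : R * R) : R * R :=
  (z.1 * w.1 - z.2 * w.2, z.1 * w.2 + z.2 * w.1).

Definition is_subgroup (G : zmodType) (N : set G) : Prop :=
  N 0 /\ (forall x y, N x -> N y -> N (x - y)).

(* f is a group homomorphism N -> T (only its values on N matter) *)
Definition hom_on_to_circle (R : realType) (G : zmodType) (N : set G)
    (f : G -> R * R) : Prop :=
  (forall x, N x -> on_circle (f x)) /\
  (forall x y, N x -> N y -> f (x + y) = cmul (f x) (f y)).

Definition continuous_character (R : realType) (G : topologicalZmodType)
    (chi : G -> R * R) : Prop :=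
  hom_on_to_circle [set: G] chi /\ continuous chi.

Definition h_embedded (R : realType) (G : topologicalZmodType) (N : set G) : Prop :=
  forall f : G -> R * R, hom_on_to_circle N f ->
    exists chi : G -> R * R, continuous_character chi /\
      (forall x, N x -> chi x = f x).

Definition property_h (R : realType) (G : topologicalZmodType) : Prop :=
  forall N : set G, is_subgroup N -> countable N -> h_embedded R N.

Definition totally_bounded_group (G : topologicalZmodType) : Prop :=
  forall U : set G, nbhs 0 U ->
    exists F : set G, finite_set F /\
      forall x : G, exists2 a, F a & U (x - a).

(* Main.v *)
Require Import Defs.
From HB Require Import structures.
From mathcomp Require Import all_boot all_order all_algebra.
From mathcomp Require Import all_classical all_reals all_analysis.
From mathcomp Require Import ring lra zify.
Set Implicit Arguments. Unset Strict Implicit. Unset Printing Implicit Defensive.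
Import Order.TTheory GRing.Theory Num.Theory.
Import numFieldNormedType.Exports.
Local Open Scope classical_set_scope.
Local Open Scope ring_scope.

Section Circle.
Variable R : realType.

Definition ex (t : R) : R * R := (cos t, sin t).
Definition one : R * R := (1, 0).
Definition close (z w : R * R) (e : R) := `|z.1 - w.1| < e /\ `|z.2 - w.2| < e.

Lemma ex_circle t : on_circle (ex t).
Proof. by rewrite /on_circle /= cos2Dsin2. Qed.

Lemma cmul_ex s t : cmul (ex s) (ex t) = ex (s + t).
Proof. by rewrite /cmul /ex /= cosD sinD; congr (_, _); ring. Qed.

Lemma cmulA (z w u : R * R) : cmul z (cmul w u) = cmul (cmul z w) u.
Proof. rewrite /cmul /=; congr (_, _); ring. Qed.

Lemma cmulC (z w : R * R) : cmul z w = cmul w z.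
Proof. rewrite /cmul /=; congr (_, _); ring. Qed.

Lemma cmul1z (z : R * R) : cmul one z = z.
Proof. case: z => a b; rewrite /cmul /one /=; congr (_, _); ring. Qed.

Lemma ex0 : ex 0 = one.
Proof. by rewrite /ex cos0 sin0. Qed.

Lemma cmul_circle (z w : R * R) : on_circle z -> on_circle w -> on_circle (cmul z w).
Proof.
case: z => a b; case: w => c d; rewrite /on_circle /cmul /= => h1 h2.
have -> : (a * c - b * d) ^+ 2 + (a * d + b * c) ^+ 2 = (a^+2 + b^+2) * (c^+2 + d^+2) by ring.
by rewrite h1 h2 mulr1.
Qed.

Lemma circle_ex (z : R * R) : on_circle z -> exists s, z = ex s.
Proof.
case: z => a b; rewrite /on_circle /= => h.
have ha : -1 <= a <= 1.
  by apply/andP; split; nra.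
have hsq : Num.sqrt (1 - a ^+ 2) = `|b|.
  by rewrite -h addrC addKr sqrtr_sqr.
have ca : cos (acos a) = a by rewrite acosK // in_itv.
have sa : sin (acos a) = `|b| by rewrite sin_acos.
have [b0|b0] := leP 0 b.
  by exists (acos a); rewrite /ex ca sa ger0_norm.
by exists (- acos a); rewrite /ex cosN sinN ca sa ltr0_norm // opprK.
Qed.

Lemma ex_per (q : int) t : ex (t + q%:~R * (pi *+ 2)) = ex t.
Proof.
have hn : forall (n : nat) t, ex (t + n%:R * (pi *+ 2)) = ex t.
  by move=> n u; rewrite /ex mulr_natl (periodicn (@cosD2pi R)) (periodicn (@sinD2pi R)).
case: q => n; first exact: hn.
by rewrite NegzE mulrNz pmulrn mulNr -(hn n.+1 (t - _)) subrK.
Qed.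

Lemma notclose (u w : R * R) : on_circle u -> u.1 <= 0 -> on_circle w -> ~ close (cmul u w) w 1.
Proof.
case: u => a b; case: w => c d; rewrite /on_circle /close /cmul /= => h1 ha h2 [hx hy].
move: hx hy => /ltr_normlP [hx1 hx2] /ltr_normlP [hy1 hy2].
have : (a * c - b * d - c) ^+ 2 + (a * d + b * c - d) ^+ 2 = ((a - 1) ^+ 2 + b ^+ 2) * (c^+2 + d^+2).
  ring.
rewrite h2 mulr1 => E; nra.
Qed.
End Circle.

Section Hom.
Variables (R : realType) (G : topologicalZmodType).
Implicit Types (chi f : G -> R * R) (H : set G) (x y e : G).

Definition thom chi := hom_on_to_circle [set: G] chi.

Lemma thom_circ chi x : thom chi -> on_circle (chi x).
Proof. by case=> h _; apply: h. Qed.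

Lemma thomD chi x y : thom chi -> chi (x + y) = cmul (chi x) (chi y).
Proof. by case=> _ h; apply: h. Qed.

Lemma thom0 chi : thom chi -> chi 0 = one R.
Proof.
move=> hc; have := thomD 0 0 hc; have := thom_circ 0 hc; rewrite addr0.
case: (chi 0) => a b; rewrite /on_circle /cmul /one /= => h [e1 e2].
have hb : b = 0 by nra.
subst b; congr (_, _); nra.
Qed.

Lemma thomB chi x y : thom chi -> chi x = cmul (chi (x - y)) (chi y).
Proof. by move=> hc; rewrite -thomD // subrK. Qed.

Lemma thomN chi x s : thom chi -> chi x = ex s -> chi (- x) = ex (- s).
Proof.
move=> hc hx.
have h1 : one R = cmul (chi (- x)) (ex s) by rewrite -hx -(thomD _ _ hc) addNr (thom0 hc).
have : cmul (cmul (chi (- x)) (ex s)) (ex (- s)) = ex (- s) by rewrite -h1 cmul1z.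
by rewrite -cmulA cmul_ex subrr ex0 cmulC cmul1z.
Qed.

Lemma thom_mulz chi x s (j : int) : thom chi -> chi x = ex s -> chi (x *~ j) = ex (j%:~R * s).
Proof.
move=> hc hx.
have hn : forall n : nat, chi (x *+ n) = ex (n%:R * s).
  elim=> [|n IH]; first by rewrite mulr0n mul0r ex0 (thom0 hc).
  by rewrite mulrS (thomD _ _ hc) hx IH cmul_ex mulrS mulrDl mul1r.
case: j => n; first by rewrite hn.
by rewrite NegzE mulrNz (thomN hc (hn n.+1)) mulNr.
Qed.

Lemma sub0 H : is_subgroup H -> H 0.
Proof. by case. Qed.
Lemma subB H x y : is_subgroup H -> H x -> H y -> H (x - y).
Proof. by case=> _ h; apply: h. Qed.
Lemma subN H x : is_subgroup H -> H x -> H (- x).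
Proof. by move=> hH hx; rewrite -sub0r; apply: subB => //; apply: sub0. Qed.
Lemma subD H x y : is_subgroup H -> H x -> H y -> H (x + y).
Proof. by move=> hH hx hy; rewrite -[y]opprK; apply: subB => //; apply: subN. Qed.
Lemma submz H x (j : int) : is_subgroup H -> H x -> H (x *~ j).
Proof.
move=> hH hx.
have hn : forall n : nat, H (x *+ n).
  elim=> [|n IH]; first by rewrite mulr0n; apply: sub0.
  by rewrite mulrS; apply: subD.
case: j => n; first exact: (hn n).
by rewrite NegzE mulrNz; apply: subN => //; apply: hn.
Qed.

Definition span1 H e := [set x | exists h k, H h /\ x = h + e *~ k].

Lemma span1_sub H e : is_subgroup H -> is_subgroup (span1 H e).
Proof.
move=> hH; split; first by exists 0, 0; split; [apply: sub0 | rewrite mulr0z addr0].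
move=> x y [h1 [k1 [H1 ->]]] [h2 [k2 [H2 ->]]]; exists (h1 - h2), (k1 - k2); split.
  exact: subB.
by rewrite mulrzBr opprD addrACA.
Qed.

Lemma span1_count H e : countable H -> countable (span1 H e).
Proof.
move=> cH.
have -> : span1 H e = (fun p : G * int => p.1 + e *~ p.2) @` (H `*` [set: int]).
  apply/seteqP; split=> x.
    by move=> [h [k [Hh ->]]]; exists (h, k).
  by move=> [[h k] [/= Hh _] <-]; exists h, k.
apply: sub_countable (card_image_le _ _) _.
by apply: countableX.
Qed.

Lemma span1_l H e h : H h -> span1 H e h.
Proof. by move=> Hh; exists h, 0; rewrite mulr0z addr0. Qed.

Lemma span1_e H e : is_subgroup H -> span1 H e e.
Proof. by move=> hH; exists 0, 1; split; [apply: sub0 | rewrite add0r]. Qed.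

Lemma GE chi H e (t : R) : thom chi -> is_subgroup H ->
  (forall j : int, H (e *~ j) -> chi (e *~ j) = ex (j%:~R * t)) ->
  exists f, hom_on_to_circle (span1 H e) f /\
    forall h (k : int), H h -> f (h + e *~ k) = cmul (chi h) (ex (k%:~R * t)).
Proof.
move=> hc hH compat.
pose val (p : G * int) := cmul (chi p.1) (ex (p.2%:~R * t)).
have indep : forall h h' k k', H h -> H h' -> h + e *~ k = h' + e *~ k' -> val (h, k) = val (h', k').
  move=> h h' k k' Hh Hh' E.
  have E2 : e *~ (k - k') = h' - h.
    by rewrite mulrzBr; apply/eqP; rewrite subr_eq addrAC -E addrAC subrr add0r.
  have Hk : H (e *~ (k - k')) by rewrite E2; apply: subB.
  rewrite /val /= (thomB h' h hc) -E2 (compat _ Hk).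
  rewrite (cmulC (ex _)) -cmulA cmul_ex; congr (cmul _ (ex _)).
  by rewrite intrB; ring.
pose f x := if pselect (exists p : G * int, H p.1 /\ x = p.1 + e *~ p.2) is left P
  then val (proj1_sig (cid P)) else one R.
have fE : forall h k, H h -> f (h + e *~ k) = val (h, k).
  move=> h k Hh; rewrite /f; case: pselect => [P|nP]; last first.
    by exfalso; apply: nP; exists (h, k).
  case: (cid P) => [[h' k'] [/= Hh' E]] /=.
  by apply: indep.
exists f; split; last by move=> h k Hh; rewrite fE.
split.
  move=> x [h [k [Hh ->]]]; rewrite fE //; apply: cmul_circle; [exact: thom_circ | exact: ex_circle].
move=> x y [h1 [k1 [H1 ->]]] [h2 [k2 [H2 ->]]].
rewrite addrACA -mulrzDr !fE //; last by apply: subD.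
rewrite /val /= (thomD _ _ hc) intrD mulrDl -cmul_ex.
rewrite -!cmulA; congr cmul; rewrite !cmulA; congr cmul; exact: cmulC.
Qed.
End Hom.

Section Root.
Variables (R : realType) (G : topologicalZmodType).
Implicit Types (chi f : G -> R * R) (H : set G) (x y e : G).

Lemma cos_le0 (t : R) : pi / 2 <= t <= pi / 2 + pi -> cos t <= 0.
Proof.
move=> /andP [h1 h2].
have := cosDpi (t - pi); rewrite subrK => ->.
rewrite oppr_le0; apply: cos_ge0_pihalf; apply/andP; split; lra.
Qed.

Lemma Root chi H e : thom chi -> is_subgroup H -> ~ H e ->
  exists t : R, cos t <= 0 /\ forall j : int, H (e *~ j) -> chi (e *~ j) = ex (j%:~R * t).
Proof.
move=> hc hH He.
have pi0 : (0 : R) < pi := @pi_gt0 R.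
case: (pselect (exists n : nat, (0 < n)%N /\ H (e *+ n))) => [ex_n|no_n]; last first.
  exists pi; split; first by rewrite cospi lerN10.
  move=> j Hj.
  have j0 : j = 0.
    apply/eqP; apply/negPn/negP => jn0; apply: no_n; exists `|j|%N; split.
      by rewrite absz_gt0.
    case: (ltP 0 j) => [jp|jn].
      by rewrite pmulrn abszE ger0_norm ?ltW.
    rewrite pmulrn abszE ler0_norm // mulrNz; apply: subN => //.
  by rewrite j0 mulr0z mul0r ex0 (thom0 hc).
have exP : exists n, (fun n => (0 < n)%N && `[< H (e *+ n) >]) n.
  by case: ex_n => n [n0 hn]; exists n; rewrite n0 /=; apply/asboolP.
case: (ex_minnP exP) => m /andP [m0 /asboolP Hm] mmin.
have m1 : m != 1%N by apply/eqP => m1; apply: He; rewrite m1 mulr1n in Hm.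
have m2 : (2 <= m)%N by case: m m0 m1 {Hm mmin} => [|[|]].
have M2 : (2 : R) <= m%:R by rewrite (ler_nat R 2 m).
have [s hs] := circle_ex (thom_circ (e *+ m) hc).
pose i := Num.ceil ((m%:R * (pi / 2) - s) / (pi *+ 2)).
pose t := (s + i%:~R * (pi *+ 2)) / m%:R.
have Mt : m%:R * t = s + i%:~R * (pi *+ 2) by rewrite /t mulrC divfK // pnatr_eq0 -lt0n.
have hi1 : (m%:R * (pi / 2) - s) / (pi *+ 2) <= i%:~R by apply: ceil_ge.
have hi2 : (i - 1)%:~R < (m%:R * (pi / 2) - s) / (pi *+ 2) by apply: ceilB1_lt.
have pi2 : (0 : R) < pi *+ 2 by rewrite mulrn_wgt0.
rewrite ler_pdivrMr // in hi1; rewrite ltr_pdivlMr // intrB in hi2.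
exists t; split.
  have mp : (0 : R) < m%:R by rewrite ltr0n.
  have h2p : (pi : R) *+ 2 <= m%:R * pi by rewrite mulr2n; nra.
  apply: cos_le0; apply/andP; split.
    by rewrite /t ler_pdivlMr //; lra.
  by rewrite /t ler_pdivrMr //; lra.
move=> j Hj.
have md : (m%:Z != 0) by rewrite eqz_nat -lt0n.
have hr0 := modz_ge0 j md; have hr1 := ltz_mod j md.
have Hr : H (e *~ (j %% m)%Z).
  have -> : e *~ (j %% m)%Z = e *~ j - (e *+ m) *~ (j %/ m)%Z.
    rewrite pmulrn -mulrzA -mulrzBr; congr (_ *~ _).
    by rewrite {2}(divz_eq j m); ring.
  by apply: subB => //; apply: submz.
have r0 : (j %% m)%Z = 0.
  apply/eqP/negPn/negP => rn0.
  have : (m <= `|(j %% m)%Z|)%N.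
    apply: mmin; apply/andP; split; first by rewrite absz_gt0.
    by apply/asboolP; rewrite pmulrn abszE ger0_norm.
  by rewrite leqNgt -ltz_nat abszE ger0_norm // hr1.
rewrite (divz_eq j m) r0 addr0 (mulrC (j %/ m)%Z) mulrzA -pmulrn (thom_mulz _ hc hs).
have Mt' : ((m%:Z)%:~R : R) * t = s + i%:~R * (pi *+ 2) := Mt.
by rewrite intrM (mulrC (m%:Z)%:~R) -mulrA Mt' mulrDr mulrA -intrM ex_per.
Qed.
End Root.

Section Chars.
Variables (R : realType) (G : topologicalZmodType).
Hypothesis hh : property_h R G.
Implicit Types (chi f : G -> R * R) (H : set G) (x y e c d : G).

Definition cchar chi := continuous_character chi.

Lemma cchar_thom chi : cchar chi -> thom chi.
Proof. by case. Qed.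

Lemma cchar_one : cchar (fun _ => one R).
Proof.
split; last exact: cst_continuous.
split; first by move=> x _; rewrite /on_circle /one /= expr1n expr0n addr0.
by move=> x y _ _; rewrite cmul1z.
Qed.

Lemma close_sym (z w : R * R) eps : close z w eps -> close w z eps.
Proof. by rewrite /close distrC [`|z.2 - _|]distrC. Qed.

Lemma cont_close chi x eps : cchar chi -> 0 < eps ->
  nbhs x [set y | close (chi y) (chi x) eps].
Proof.
move=> [_ hc] e0.
have hb : nbhs x (chi @^-1` ball (chi x) eps) := hc x _ (nbhsx_ballx (chi x) eps e0).
apply: filterS hb => y /=.
rewrite /ball /= /prod_ball /= => -[].
by rewrite /close /ball /= => h1 h2; split; rewrite distrC.
Qed.

Lemma TC H x : countable H -> is_subgroup H -> ~ H x ->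
  exists chi, [/\ cchar chi, (forall h, H h -> chi h = one R) & (chi x).1 <= 0].
Proof.
move=> cH sH Hx.
have ht : thom (fun _ : G => one R) := cchar_thom cchar_one.
have [t [ct compat]] := Root ht sH Hx.
have [f [hf fE]] := GE ht sH compat.
have [chi [hchi chiE]] := hh (span1_sub x sH) (span1_count x cH) hf.
exists chi; split => //.
  move=> h Hh; have E : h = h + x *~ 0 by rewrite mulr0z addr0.
  rewrite chiE; last by apply: span1_l.
  by rewrite {1}E fE // mul0r ex0 cmul1z.
have E : x = 0 + x *~ 1 by rewrite mulr1z add0r.
rewrite chiE; last by apply: span1_e.
by rewrite {1}E fE ?mul1r ?cmul1z //; apply: sub0.
Qed.

Definition Conv (s : nat -> G) c := forall chi, cchar chi -> forall eps : R, 0 < eps ->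
  exists M, forall n, (M <= n)%N -> close (chi (s n)) (chi c) eps.

Definition fin2one {T : Type} (s : nat -> T) := forall z : T, exists M, forall n, (M <= n)%N -> s n <> z.

Lemma Conv_sub s c (phi : nat -> nat) : Conv s c -> (forall k, (k <= phi k)%N) ->
  Conv (fun k => s (phi k)) c.
Proof.
move=> hs hphi chi hc eps e0; have [M hM] := hs chi hc eps e0.
by exists M => n hn; apply: hM; apply: leq_trans hn (hphi n).
Qed.

Lemma fin2one_sub {T : Type} (s : nat -> T) (phi : nat -> nat) : fin2one s -> (forall k, (k <= phi k)%N) ->
  fin2one (fun k => s (phi k)).
Proof.
move=> hs hphi z; have [M hM] := hs z.
by exists M => n hn; apply: hM; apply: leq_trans hn (hphi n).
Qed.

Lemma coset_closed H (s : nat -> G) c d : countable H -> is_subgroup H ->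
  (forall n, H (s n - d)) -> Conv s c -> H (c - d).
Proof.
move=> cH sH hs hc; apply: contrapT => Hcd.
have [chi [hchi chi1 chicd]] := TC cH sH Hcd.
have [M hM] := hc chi hchi 1 ltr01.
have := hM M (leqnn M).
have th := cchar_thom hchi.
rewrite (thomB (s M) d th) (thomB c d th) chi1 // cmul1z => /close_sym.
apply: notclose => //; [exact: thom_circ | exact: thom_circ].
Qed.

Lemma closed_nbhs H x : countable H -> is_subgroup H -> ~ H x -> nbhs x (fun y => ~ H y).
Proof.
move=> cH sH Hx.
have [chi [hchi chi1 chix]] := TC cH sH Hx.
apply: filterS (cont_close x hchi ltr01) => y [hy _] Hy.
move: hy; rewrite chi1 // /one /=.
move/ltr_normlP => [h1 h2]; lra.
Qed.
End Chars.

Section Zlem.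
Variable R : realType.

Lemma unbounded (x : nat -> int) : fin2one x ->
  forall B : nat, exists M, forall n, (M <= n)%N -> (B <= `|x n|)%N.
Proof.
move=> hx; elim=> [|B [M1 h1]]; first by exists 0%N.
have [M2 h2] := hx B%:Z; have [M3 h3] := hx (- B%:Z).
exists (maxn M1 (maxn M2 M3)) => n; rewrite !geq_max => /and3P [n1 n2 n3].
have := h1 n n1; have := h2 n n2; have := h3 n n3; move=> *; lia.
Qed.

Lemma IL (y : int) (a l : R) : 0 < l -> pi *+ 4 <= (`|y|%N)%:R * l ->
  exists a', [/\ a <= a', a' + pi / (`|y|%N)%:R <= a + l &
    forall t, a' <= t <= a' + pi / (`|y|%N)%:R -> cos (y%:~R * t) <= 0].
Proof.
move=> l0 hY; set Y : R := (`|y|%N)%:R in hY *.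
have h4 : (pi : R) *+ 4 = pi + pi + pi + pi by rewrite !mulrS mulr0n addr0 !addrA.
rewrite h4 in hY.
have pi0 : (0 : R) < pi := @pi_gt0 R.
have Y0 : 0 < Y.
  rewrite lt_neqAle ler0n andbT; apply/negP => /eqP Y0; rewrite -Y0 mul0r in hY.
  have : (0 : R) < pi *+ 4 by rewrite mulrn_wgt0. lra.
have pi2 : (0 : R) < pi *+ 2 by rewrite mulrn_wgt0.
pose q := Num.ceil ((Y * a - pi / 2) / (pi *+ 2)).
have hq1 : (Y * a - pi / 2) / (pi *+ 2) <= q%:~R by apply: ceil_ge.
have hq2 : (q - 1)%:~R < (Y * a - pi / 2) / (pi *+ 2) by apply: ceilB1_lt.
rewrite ler_pdivrMr // in hq1; rewrite ltr_pdivlMr // intrB in hq2.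
exists ((q%:~R * (pi *+ 2) + pi / 2) / Y); split.
- by rewrite ler_pdivlMr //; rewrite mulr2n in hq1 hq2 *; rewrite mulrn_wgt0 in pi2; lra.
- rewrite -mulrDl ler_pdivrMr //; rewrite mulr2n in hq1 hq2 *; lra.
move=> t /andP [t1 t2].
rewrite -mulrDl ler_pdivlMr // in t2; rewrite ler_pdivrMr // in t1.
have cY : cos (y%:~R * t) = cos (Y * t).
  rewrite /Y natr_absz intr_norm; case: (lerP 0 (y%:~R : R)) => hy.
    by rewrite ger0_norm.
  by rewrite ltr0_norm // mulNr cosN.
rewrite cY.
have -> : Y * t = (Y * t - q%:~R * (pi *+ 2)) + q%:~R * (pi *+ 2) by rewrite subrK.
have := ex_per q (Y * t - q%:~R * (pi *+ 2)); rewrite /ex => -[-> _].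
apply: cos_le0; rewrite mulr2n in t1 t2 *; apply/andP; split; lra.
Qed.
End Zlem.

Section Zlem2.
Variable R : realType.
Variable x : nat -> int.
Hypothesis hx : fin2one x.

Definition stepP (st st' : R * R * nat) :=
  exists n, 0 < st.1.2 -> 0 < st'.1.2 /\ [/\ st.1.1 <= st'.1.1, st'.1.1 + st'.1.2 <= st.1.1 + st.1.2,
    (st.2 <= n)%N, st'.2 = n.+1 &
    forall t, st'.1.1 <= t <= st'.1.1 + st'.1.2 -> cos ((x n)%:~R * t) <= 0].

Lemma step_ex st : exists st', stepP st st'.
Proof.
case: st => [[a l] idx].
case: (lerP l 0) => [l0|l0].
  by exists (a, l, idx), 0%N => /=; rewrite ltNge l0.
have pi0 : (0 : R) < pi := @pi_gt0 R.
pose B := `|Num.ceil (pi *+ 4 / l)|%N.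
have hB : pi *+ 4 <= B%:R * l.
  rewrite -ler_pdivrMr // /B natr_absz intr_norm.
  apply: le_trans (ceil_ge _) (ler_norm _).
have [M hM] := unbounded hx B.
pose n := maxn idx M.
have hn : (B <= `|x n|)%N by apply: hM; rewrite leq_maxr.
have hY : pi *+ 4 <= (`|x n|%N)%:R * l.
  apply: le_trans hB _; rewrite ler_pM2r // ler_nat //.
have [a' [h1 h2 h3]] := @IL R (x n) a l l0 hY.
have Y0 : (0 : R) < (`|x n|%N)%:R.
  rewrite lt_neqAle ler0n andbT; apply/negP => /eqP Y0; rewrite -Y0 mul0r in hY.
  have : (0 : R) < pi *+ 4 by rewrite mulrn_wgt0. lra.
exists (a', pi / (`|x n|%N)%:R, n.+1), n => _ /=; split; first by rewrite divr_gt0.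
by split => //; rewrite leq_maxl.
Qed.

Definition stepf st := proj1_sig (cid (step_ex st)).
Definition seqs k := iter k stepf (0, 1, 0%N).

Lemma seqs_step k : stepP (seqs k) (seqs k.+1).
Proof. rewrite /seqs /= /stepf; exact: proj2_sig (cid _). Qed.

Lemma seqs_pos k : 0 < (seqs k).1.2.
Proof.
elim: k => [|k IH]; first by rewrite /seqs /= ltr01.
by have [n /(_ IH) [] ] := seqs_step k.
Qed.

Lemma seqs_prop k : exists n, [/\ (seqs k).1.1 <= (seqs k.+1).1.1,
    (seqs k.+1).1.1 + (seqs k.+1).1.2 <= (seqs k).1.1 + (seqs k).1.2,
    ((seqs k).2 <= n)%N, (seqs k.+1).2 = n.+1 &
    forall t, (seqs k.+1).1.1 <= t <= (seqs k.+1).1.1 + (seqs k.+1).1.2 -> cos ((x n)%:~R * t) <= 0].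
Proof. by have [n /(_ (seqs_pos k)) [_ [] *]] := seqs_step k; exists n. Qed.

Lemma seqs_idx k : (k <= (seqs k).2)%N.
Proof.
elim: k => [|k IH] //; have [n [_ _ h ->]] := seqs_prop k; lia.
Qed.

Lemma seqs_mono k d : (seqs k).1.1 <= (seqs (k + d)).1.1 /\
  (seqs (k + d)).1.1 + (seqs (k + d)).1.2 <= (seqs k).1.1 + (seqs k).1.2.
Proof.
elim: d => [|d [IH1 IH2]]; first by rewrite addn0.
rewrite addnS; have [n [h1 h2 _ _ _]] := seqs_prop (k + d); split.
  exact: le_trans IH1 h1.
exact: le_trans h2 IH2.
Qed.

Lemma seqs_bound j k : (seqs j).1.1 <= (seqs k).1.1 + (seqs k).1.2.
Proof.
have p := seqs_pos.
case: (leqP j k) => hjk.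
  have [h _] := seqs_mono j (k - j); rewrite subnKC // in h.
  by apply: le_trans h _; rewrite lerDl ltW.
have [_ h] := seqs_mono k (j - k); rewrite subnKC // in h; last exact: ltnW.
by apply: le_trans h; rewrite lerDl ltW.
Qed.

Lemma Zlem : exists t : R, forall M, exists2 n, (M <= n)%N & cos ((x n)%:~R * t) <= 0.
Proof.
pose E := [set (seqs k).1.1 | k in [set: nat]].
have E0 : E !=set0 by exists (seqs 0).1.1, 0%N.
have Eub : forall k, ubound E ((seqs k).1.1 + (seqs k).1.2).
  by move=> k _ [j _ <-]; apply: seqs_bound.
have hs : has_ubound E by exists ((seqs 0).1.1 + (seqs 0).1.2); apply: Eub.
exists (sup E) => M.
have [n [_ _ hidx _ hcos]] := seqs_prop M.
exists n; first by apply: leq_trans (seqs_idx M) hidx.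
apply: hcos; apply/andP; split.
  by apply: ub_le_sup => //; exists M.+1.
by apply: ge_sup => //; apply: Eub.
Qed.
End Zlem2.

Section Span.
Variables (G : topologicalZmodType) (a : nat -> G).

Definition lc r (k : nat -> int) : G := \sum_(i < r) a i *~ k i.
Definition Lspan r := [set y | exists k, y = lc r k].

Lemma Lspan_sub r : is_subgroup (Lspan r).
Proof.
split; first by exists (fun _ => 0); rewrite /lc big1 // => i _; rewrite mulr0z.
move=> x y [k1 ->] [k2 ->]; exists (fun i => k1 i - k2 i).
by rewrite /lc -sumrB; apply: eq_bigr => i _; rewrite mulrzBr.
Qed.

Lemma Lspan_count r : countable (Lspan r).
Proof.
apply: (@sub_countable _ _ _ ((fun s : seq int => lc r (fun i => nth 0 s i)) @` [set: seq int])).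
  apply: subset_card_le => y [k ->]; exists (mkseq k r) => //.
  by apply: eq_bigr => i _; rewrite nth_mkseq.
by apply: sub_countable (card_image_le _ _) _.
Qed.

Lemma Lspan0 y : Lspan 0 y -> y = 0.
Proof. by move=> [k ->]; rewrite /lc big_ord0. Qed.

Lemma Lspan_S r y : Lspan r.+1 y <-> span1 (Lspan r) (a r) y.
Proof.
split.
  move=> [k ->]; exists (lc r k), (k r); split; first by exists k.
  by rewrite /lc big_ord_recr.
move=> [h [j [[k ->] ->]]]; exists (fun i => if i == r then j else k i).
rewrite /lc big_ord_recr /= eqxx; congr (_ + _).
by apply: eq_bigr => i _ /=; rewrite ifN // neq_ltn ltn_ord.
Qed.

Lemma Lspan_mono r r' y : (r <= r')%N -> Lspan r y -> Lspan r' y.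
Proof.
move=> hr [k ->]; exists (fun i => if (i < r)%N then k i else 0).
rewrite /lc (big_ord_widen _ (fun i => a i *~ k i) hr) big_mkcond /=.
by apply: eq_bigr => i _; case: ifP => //; rewrite mulr0z.
Qed.
End Span.

Section FG.
Variables (R : realType) (G : topologicalZmodType).
Hypothesis hh : property_h R G.
Variable a : nat -> G.

Lemma FG r : forall d (s : nat -> G) c, (forall n, Lspan a r (s n - d)) -> fin2one s ->
  @Conv R G s c -> False.
Proof.
elim: r => [|r IH] d s c hs hf hc.
  have [M hM] := hf d; apply: (hM M (leqnn M)).
  by apply/eqP; rewrite -subr_eq0; apply/eqP; apply: Lspan0 (hs M).
set H := Lspan a r; set e := a r.
have sH : is_subgroup H := Lspan_sub a r.
have cH : countable H := Lspan_count a r.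
have hcd : Lspan a r.+1 (c - d).
  apply: (coset_closed hh (Lspan_count a r.+1) (Lspan_sub a r.+1) hs hc).
have [ln [kn hlk]] : exists (ln : nat -> G) (kn : nat -> int),
    forall n, H (ln n) /\ s n - d = ln n + e *~ kn n.
  have : forall n, exists p : G * int, H p.1 /\ s n - d = p.1 + e *~ p.2.
    by move=> n; have [h [k [Hh E]]] := (Lspan_S a r _).1 (hs n); exists (h, k).
  move=> /choice [p hp]; exists (fun n => (p n).1), (fun n => (p n).2); exact: hp.
have [lc0 [kc [Hlc Ec]]] := (Lspan_S a r _).1 hcd.
case: (pselect (exists k : int, forall M, exists n, (M <= n)%N /\ H (s n - d - e *~ k))) => [[k hk]|nA].
  have [phi hphi] := choice hk.
  apply: (IH (d + e *~ k) (fun n => s (phi n)) c).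
  - by move=> n; rewrite opprD addrA; exact: (hphi n).2.
  - by apply: fin2one_sub => // n; exact: (hphi n).1.
  - by apply: Conv_sub => // n; exact: (hphi n).1.
have nA' : forall k : int, exists M, forall n, (M <= n)%N -> ~ H (s n - d - e *~ k).
  move=> k; apply: contrapT => hk; apply: nA; exists k => M.
  apply: contrapT => hM; apply: hk; exists M => n hn Hn; apply: hM; exists n; split => //.
have J0 : forall j : int, H (e *~ j) -> j = 0.
  move=> j Hj; apply/eqP/negPn/negP => j0.
  pose p := `|j|%N.
  have p0 : (0 < p)%N by rewrite absz_gt0.
  have Hp : H (e *~ p%:Z).
    rewrite /p abszE; case: (lerP 0 j) => hj; first by rewrite ger0_norm.
    by rewrite ltr0_norm // mulrNz; apply: subN.
  have pig : forall q : nat, exists M, forall n, (M <= n)%N -> forall rho : nat, (rho < q)%N ->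
      ~ H (s n - d - e *~ rho%:Z).
    elim=> [|q [M1 h1]]; first by exists 0%N.
    have [M2 h2] := nA' q%:Z.
    exists (maxn M1 M2) => n; rewrite geq_max => /andP [n1 n2] rho.
    rewrite ltnS leq_eqVlt => /orP [/eqP ->|hr]; first exact: h2.
    exact: h1.
  have [M hM] := pig p.
  pose rho := (kn M %% p%:Z)%Z.
  have pz : p%:Z != 0 by rewrite eqz_nat -lt0n.
  have r0 := modz_ge0 (kn M) pz; have r1 := ltz_mod (kn M) pz.
  apply: (hM M (leqnn M) `|rho|%N).
    by rewrite -ltz_nat abszE ger0_norm // (ltr_le_trans r1) // abszE normr_id.
  have [HlM EM] := hlk M.
  have -> : s M - d - e *~ `|rho|%N%:Z = ln M + (e *~ p%:Z) *~ (kn M %/ p%:Z)%Z.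
    rewrite EM abszE ger0_norm // -mulrzA -addrA -mulrzBr; congr (_ + _ *~ _).
    by rewrite {1}(divz_eq (kn M) p%:Z) /rho; ring.
  by apply: subD => //; apply: submz.
have f2 : fin2one (fun n => kn n - kc).
  move=> v; have [M hM] := nA' (v + kc); exists M => n hn E; apply: (hM n hn).
  have [HlM EM] := hlk n.
  by rewrite EM -E subrK addrK.
have [t ht] := Zlem R f2.
have ht1 : thom (fun _ : G => one R) := cchar_thom (cchar_one R G).
have compat : forall j : int, H (e *~ j) -> one R = ex (j%:~R * t).
  by move=> j Hj; rewrite (J0 j Hj) mul0r ex0.
have [f [hfh fE]] := GE ht1 sH compat.
have [chi [hchi chiE]] := hh (span1_sub e sH) (span1_count e cH) hfh.
have [M hM] := hc chi hchi 1 ltr01.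
have [n hn hcos] := ht M.
have := hM n hn.
have th := cchar_thom hchi.
have Esn : s n - c = (ln n - lc0) + e *~ (kn n - kc).
  have [_ EM] := hlk n.
  have E1 : s n - c = (s n - d) - (c - d) by rewrite opprB addrA subrK.
  by rewrite E1 EM Ec mulrzBr opprD addrACA.
rewrite (thomB (s n) c th) chiE; last first.
  by exists (ln n - lc0), (kn n - kc); split => //; apply: subB => //; exact: (hlk n).1.
rewrite Esn fE ?cmul1z; last by apply: subB => //; exact: (hlk n).1.
by apply: notclose => //; [exact: ex_circle | exact: thom_circ].
Qed.
End FG.

Record gst (R : realType) (G : zmodType) := GSt { gR : nat; gchi : G -> R * R; gM : set G; gidx : nat }.

Lemma close_one_pos (R : realType) (t : R) : close (ex t) (one R) 1 -> 0 < cos t.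
Proof. rewrite /close /ex /one /= => -[/ltr_normlP [h1 h2] _]; lra. Qed.

Section HL.
Variables (R : realType) (G : topologicalZmodType).
Hypothesis hh : property_h R G.
Variable a : nat -> G.

Definition Nset := [set y | exists r, Lspan a r y].

Lemma Nset_sub : is_subgroup Nset.
Proof.
split; first by exists 0%N; apply: sub0; apply: Lspan_sub.
move=> x y [r1 h1] [r2 h2]; exists (maxn r1 r2); apply: subB; first exact: Lspan_sub.
  by apply: Lspan_mono h1; rewrite leq_maxl.
by apply: Lspan_mono h2; rewrite leq_maxr.
Qed.

Lemma Nset_count : countable Nset.
Proof.
have -> : Nset = \bigcup_(r in [set: nat]) Lspan a r.
  by apply/seteqP; split => y [r]; [exists r | move=> _; exists r].
by apply: bigcup_countable => // r _; apply: Lspan_count.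
Qed.

Variable s : nat -> G.
Hypothesis hsN : forall n, Nset (s n).
Hypothesis case2 : forall r, exists M, forall n, (M <= n)%N -> ~ Lspan a r (s n).

Definition Inv (st : gst R G) := [/\ cchar (gchi st), is_subgroup (gM st), countable (gM st) &
  gM st `<=` Lspan a (gR st)].

Definition gstepP (st st' : gst R G) := exists n (t : R), Inv st -> [/\ Inv st', (gidx st <= n)%N,
  gidx st' = n.+1, (forall y, gM st y -> gM st' y /\ gchi st' y = gchi st y) &
  [/\ gM st' (s n), gchi st' (s n) = ex t & cos t <= 0]].

Lemma gstep_ex st : exists st', gstepP st st'.
Proof.
case: (pselect (Inv st)) => [hI|nI]; last by exists st, 0%N, 0 => /nI.
case: hI => hchi sM cM sub.
have [M hM] := case2 (gR st).
pose n := maxn (gidx st) M.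
have hn : ~ Lspan a (gR st) (s n) by apply: hM; rewrite leq_maxr.
have hMe : ~ gM st (s n) by move=> /sub.
have th := cchar_thom hchi.
have [t [ct compat]] := Root th sM hMe.
have [f [hf fE]] := GE th sM compat.
have [chi' [hchi' chiE]] := hh (span1_sub (s n) sM) (span1_count (s n) cM) hf.
have [re hre] := hsN n.
exists (GSt (maxn (gR st) re) chi' (span1 (gM st) (s n)) n.+1), n, t => _ /=.
split => //.
- split => //; [exact: span1_sub | exact: span1_count |].
  move=> y [h [k [Hh ->]]]; apply: subD; first exact: Lspan_sub.
    by apply: Lspan_mono (sub _ Hh); rewrite leq_maxl.
  by apply: submz; [exact: Lspan_sub | apply: Lspan_mono hre; rewrite leq_maxr].
- by rewrite leq_maxl.
- move=> y My; split; first exact: span1_l.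
  rewrite chiE; last exact: span1_l.
  have E : y = y + s n *~ 0 by rewrite mulr0z addr0.
  by rewrite {1}E fE // mul0r ex0 cmulC cmul1z.
split => //; first exact: span1_e.
rewrite chiE; last exact: span1_e.
have E : s n = 0 + s n *~ 1 by rewrite mulr1z add0r.
by rewrite {1}E fE ?mul1r ?(thom0 th) ?cmul1z //; apply: sub0.
Qed.

Definition gstepf st := proj1_sig (cid (gstep_ex st)).

Lemma HL_contra c : fin2one s -> Conv R s c -> False.
Proof.
move=> hf hc.
have c0 : Nset (c - 0).
  by apply: (coset_closed hh Nset_count Nset_sub _ hc) => n; rewrite subr0.
rewrite subr0 in c0; case: c0 => R0 hR0.
pose st0 := GSt R0 (fun _ : G => one R) (Lspan a R0) 0%N.
pose gs k := iter k gstepf st0.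
have gs_step : forall k, gstepP (gs k) (gs k.+1).
  by move=> k; rewrite /gs /= /gstepf; exact: proj2_sig (cid _).
have Inv0 : Inv st0 by split => //; [exact: cchar_one | exact: Lspan_sub | exact: Lspan_count].
have gsI : forall k, Inv (gs k).
  elim=> [|k IH] //; by have [n [t /(_ IH) []]] := gs_step k.
have gsP : forall k, exists n (t : R), [/\ (gidx (gs k) <= n)%N,
  gidx (gs k.+1) = n.+1, (forall y, gM (gs k) y -> gM (gs k.+1) y /\ gchi (gs k.+1) y = gchi (gs k) y) &
  [/\ gM (gs k.+1) (s n), gchi (gs k.+1) (s n) = ex t & cos t <= 0]].
  by move=> k; have [n [t /(_ (gsI k)) [] *]] := gs_step k; exists n, t.
have gs_idx : forall k, (k <= gidx (gs k))%N.
  elim=> [|k IH] //; have [n [t [h1 h2 _ _]]] := gsP k; rewrite h2; lia.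
have cons : forall k d y, gM (gs k) y -> gM (gs (k + d)%N) y /\ gchi (gs (k + d)%N) y = gchi (gs k) y.
  move=> k; elim=> [|d IH] y My; first by rewrite addn0.
  have [My' E'] := IH y My; rewrite addnS.
  have [n [t [_ _ h _]]] := gsP (k + d)%N.
  by have [h1 ->] := h y My'; split.
have cons' : forall k k' y, (k <= k')%N -> gM (gs k) y -> gM (gs k') y /\ gchi (gs k') y = gchi (gs k) y.
  by move=> k k' y hk My; have := cons k (k' - k)%N y My; rewrite subnKC.
pose Minf := [set y | exists k, gM (gs k) y].
pose finf y := if pselect (exists k, gM (gs k) y) is left P then gchi (gs (proj1_sig (cid P))) y else one R.
have finfE : forall k y, gM (gs k) y -> finf y = gchi (gs k) y.
  move=> k y My; rewrite /finf; case: pselect => [P|nP]; last by exfalso; apply: nP; exists k.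
  case: (cid P) => k' My' /=.
  case: (leqP k k') => hk; first by have [_ ->] := cons' _ _ _ hk My.
  by have [_ ->] := cons' _ _ _ (ltnW hk) My'.
have sMinf : is_subgroup Minf.
  split; first by exists 0%N; apply: sub0; case: (gsI 0%N).
  move=> x y [k1 h1] [k2 h2]; exists (maxn k1 k2); apply: subB; first by case: (gsI (maxn k1 k2)).
    exact: (cons' k1 _ _ (leq_maxl _ _) h1).1.
  exact: (cons' k2 _ _ (leq_maxr _ _) h2).1.
have cMinf : countable Minf.
  have -> : Minf = \bigcup_(k in [set: nat]) gM (gs k).
    by apply/seteqP; split => y [k]; [exists k | move=> _; exists k].
  by apply: bigcup_countable => // k _; case: (gsI k).
have hfinf : hom_on_to_circle Minf finf.
  split.
    move=> y [k My]; rewrite (finfE _ _ My); apply: thom_circ; apply: cchar_thom; by case: (gsI k).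
  move=> x y [k1 h1] [k2 h2].
  pose k := maxn k1 k2.
  have h1' := (cons' k1 k x (leq_maxl _ _) h1).1.
  have h2' := (cons' k2 k y (leq_maxr _ _) h2).1.
  have sk : is_subgroup (gM (gs k)) by case: (gsI k).
  rewrite !(finfE k) //; last exact: subD.
  by apply: thomD; apply: cchar_thom; case: (gsI k).
have [chi [hchi chiE]] := hh sMinf cMinf hfinf.
have chic : chi c = one R.
  have Mc : gM (gs 0%N) c by [].
  by rewrite chiE; [rewrite (finfE 0%N) | exists 0%N].
have [M hM] := hc chi hchi 1 ltr01.
have [n [t [hn _ _ [Mn chin ct]]]] := gsP M.
have := hM n (leq_trans (gs_idx M) hn).
rewrite chic chiE; last by exists M.+1.
rewrite (finfE M.+1) // chin => /close_one_pos.
by rewrite ltNge ct.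
Qed.
End HL.

Lemma HL (R : realType) (G : topologicalZmodType) (hh : property_h R G) (a : nat -> G)
  (s : nat -> G) c : (forall n, Nset a (s n)) -> fin2one s -> Conv R s c -> False.
Proof.
move=> hsN hf hc.
case: (pselect (forall r, exists M, forall n, (M <= n)%N -> ~ Lspan a r (s n))) => [c2|nc2].
  exact: (HL_contra hh hsN c2 hf hc).
have [r hr] : exists r, forall M, exists n, (M <= n)%N /\ Lspan a r (s n).
  apply: contrapT => h; apply: nc2 => r; apply: contrapT => hr; apply: h; exists r => M.
  apply: contrapT => hM; apply: hr; exists M => n hn Ln; apply: hM; exists n; split => //.
have [phi hphi] := choice hr.
apply: (@FG R G hh a r 0 (fun n => s (phi n)) c).
- by move=> n; rewrite subr0; exact: (hphi n).2.
- by apply: fin2one_sub => // n; exact: (hphi n).1.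
- by apply: Conv_sub => // n; exact: (hphi n).1.
Qed.

Section Top.
Variables (G : topologicalZmodType) (K : set G).
Lemma inj_seq : infinite_set K -> exists a : nat -> G, injective a /\ forall n, K (a n).
Proof.
move=> /infiniteP /card_leP [f].
exists (fun n => val (f (@SigSub _ _ _ n (mem_set (I : [set: nat] n))))).
split.
  move=> n m /val_inj E.
  by have /(congr1 val) := @inj _ _ _ f _ _ (in_setT _) (in_setT _) E.
by move=> k; apply: set_valP.
Qed.
Lemma clusterSeq (u : nat -> G) p B : cluster (u @ \oo) p -> nbhs p B ->
  forall M, exists n, (M <= n)%N /\ B (u n).
Proof.
move=> hc hB M.
have hA : (u @ \oo) [set y | exists n, (M <= n)%N /\ y = u n].
  by exists M => // n /= hn; exists n.
have [y [[n [hn ->]] hy]] := hc _ _ hA hB.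
by exists n.
Qed.
Lemma compact_cluster (u : nat -> G) : compact K -> (forall n, K (u n)) -> exists p, K p /\ cluster (u @ \oo) p.
Proof.
move=> cK hu.
have : K `&` cluster (u @ \oo) !=set0.
  apply: cK; exists 0%N => // n _; exact: hu.
by move=> [p [Kp cp]]; exists p.
Qed.
End Top.

Lemma a_in_N (G : topologicalZmodType) (a : nat -> G) n : Nset a (a n).
Proof.
exists n.+1, (fun i => if i == n then 1 else 0).
rewrite /lc big_ord_recr /= eqxx mulr1z big1 ?add0r // => i _.
by rewrite ifN ?mulr0z // neq_ltn ltn_ord.
Qed.

Lemma close_tri (R : realType) (u z w : R * R) e1 e2 :
  close u z e1 -> close u w e2 -> close z w (e1 + e2).
Proof.
rewrite /close => -[h1 h2] [h3 h4]; split.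
  by rewrite (le_lt_trans (ler_distD u.1 _ _)) // ltrD // distrC.
by rewrite (le_lt_trans (ler_distD u.2 _ _)) // ltrD // distrC.
Qed.

Lemma neq_notclose (R : realType) (z w : R * R) : z <> w -> exists d, 0 < d /\ ~ close z w d.
Proof.
move=> zw; case: (leP `|z.1 - w.1| `|z.2 - w.2|) => h.
  exists `|z.2 - w.2|; split; last by move=> [_]; rewrite ltxx.
  rewrite normr_gt0 subr_eq0; apply/eqP => e2; apply: zw.
  move: h; rewrite e2 subrr normr0 normr_le0 subr_eq0 => /eqP e1.
  by case: z e1 e2 => ? ? /= -> ->; case: w.
exists `|z.1 - w.1|; split; last by move=> [+ _]; rewrite ltxx.
exact: le_lt_trans (normr_ge0 _) h.
Qed.

Lemma nbhs_fin (R : realType) (G : topologicalZmodType) (chis : nat -> G -> R * R) c (e : R) :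
  (forall i, cchar (chis i)) -> 0 < e ->
  forall m, nbhs c [set y | forall i, (i < m)%N -> close (chis i y) (chis i c) e].
Proof.
move=> hch e0; elim=> [|m IH].
  by apply: filterE => y i.
apply: filterS (filterI IH (cont_close c (hch m) e0)) => y [h1 h2] i.
by rewrite ltnS leq_eqVlt => /orP [/eqP ->|]; [exact: h2 | exact: h1].
Qed.

Unset Implicit Arguments.

Theorem lemma2p3 (R : realType) (G : topologicalZmodType)
  (hTB : totally_bounded_group G) (hh : property_h R G) :
  forall K : set G, compact K -> finite_set K.
Proof.
move=> K cK; apply: contrapT => infK.
have [a [ainj aK]] := inj_seq infK.
have sgN := Nset_sub a; have cN := Nset_count a.
have [c [Kc clc]] := compact_cluster cK aK.
have Nc : Nset a c.
  apply: contrapT => nNc.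
  have [n [_ hn]] := clusterSeq clc (closed_nbhs hh cN sgN nNc) 0.
  by apply: hn; apply: a_in_N.
pose nu (i : nat) : G := if unpickle i is Some p then lc a p.1 (fun j => nth 0 p.2 j) else 0.
have nuP : forall y, Nset a y -> exists i, nu i = y.
  move=> y [r [k ->]]; exists (pickle (r, mkseq k r)); rewrite /nu pickleK /=.
  by apply: eq_bigr => i _; rewrite nth_mkseq.
have hchis : forall i, exists chi : G -> R * R, cchar chi /\ (nu i <> 0 -> (chi (nu i)).1 <= 0).
  move=> i; case: (pselect (nu i = 0)) => [->|nz].
    by exists (fun _ => one R); split => //; exact: cchar_one.
  have s0 : is_subgroup [set (0 : G)].
    by split => // x y -> ->; rewrite subrr.
  have [chi [hchi _ hx]] := TC hh (countable1 0) s0 nz.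
  by exists chi.
have [chis chisP] := choice hchis.
have hch : forall i, cchar (chis i) by move=> i; case: (chisP i).
have hsel : forall n, exists m, [/\ (n <= m)%N,
    (forall i, (i < n.+1)%N -> close (chis i (a m)) (chis i c) (n.+1%:R^-1)) & a m <> c].
  move=> n.
  have e0 : (0 : R) < n.+1%:R^-1 by rewrite invr_gt0 ltr0n.
  have W := nbhs_fin c hch e0 n.+1.
  have [m [hm Wm]] := clusterSeq clc W n.
  case: (pselect (a m = c)) => [amc|amc]; last by exists m; split.
  have [m' [hm' Wm']] := clusterSeq clc W m.+1.
  exists m'; split => //; first by apply: leq_trans hm (ltnW hm').
  move=> am'c; have := ainj m' m; rewrite am'c amc => /(_ erefl) e; rewrite e ltnn in hm'.
  done.
have [mm mmP] := choice hsel.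
pose s n := a (mm n).
have sK : forall n, K (s n) by move=> n; apply: aK.
have sN : forall n, Nset a (s n) by move=> n; apply: a_in_N.
have sf : fin2one s.
  move=> z; case: (pselect (exists p, a p = z)) => [[p <-]|nz].
    exists p.+1 => n hn /ainj e.
    have [h1 _ _] := mmP n; rewrite e in h1; lia.
  by exists 0%N => n _ e; apply: nz; exists (mm n).
have sC : Conv R s c.
  move=> chi hchi eps e0; apply: contrapT => nC.
  have : forall M, exists n, (M <= n)%N /\ ~ close (chi (s n)) (chi c) eps.
    move=> M; apply: contrapT => hM; apply: nC; exists M => n hn.
    by apply: contrapT => hc; apply: hM; exists n; split.
  move=> /choice [phi phiP].
  have [c' [Kc' clc']] := compact_cluster cK (fun n => sK (phi n)).
  have Nc' : Nset a c'.
    apply: contrapT => nNc.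
    have [n [_ hn]] := clusterSeq clc' (closed_nbhs hh cN sgN nNc) 0.
    by apply: hn; apply: sN.
  have eqi : forall i, chis i c' = chis i c.
    move=> i; apply: contrapT => ne.
    have [d [d0 nd]] := neq_notclose ne.
    have d20 : 0 < d / 2 by rewrite divr_gt0.
    pose M := (`|Num.ceil (2 / d)|%N + i)%N.
    have hMd : M.+1%:R^-1 < d / 2.
      rewrite -(invf_div 2 d) ltf_pV2 ?posrE ?ltr0n ?divr_gt0 //.
      apply: le_lt_trans (ceil_ge _) _.
      apply: le_lt_trans (ler_norm _) _; rewrite -intr_norm -natr_absz ltr_nat.
      by rewrite ltnS leq_addr.
    have [n [hn hb]] := clusterSeq clc' (cont_close c' (hch i) d20) M.
    have [hmm hW _] := mmP (phi n).
    have hphi : (n <= phi n)%N by exact: (phiP n).1.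
    have := hW i; rewrite ltnS => /(_ (leq_trans (leq_addl _ _) (leq_trans hn hphi))) hw.
    apply: nd; rewrite [X in close _ _ X](splitr d); apply: close_tri hb _.
    move: hw; rewrite /close => -[h1 h2]; split.
      apply: lt_le_trans h1 _; apply: le_trans (ltW hMd).
      by rewrite lef_pV2 ?posrE ?ltr0n // ler_nat ltnS; apply: leq_trans hn hphi.
    apply: lt_le_trans h2 _; apply: le_trans (ltW hMd).
    by rewrite lef_pV2 ?posrE ?ltr0n // ler_nat ltnS; apply: leq_trans hn hphi.
  have cc : c' = c.
    apply: contrapT => ne.
    have Nz : Nset a (c' - c) by apply: subB.
    have [i hi] := nuP _ Nz.
    have [_ hneg] := chisP i.
    have : nu i <> 0 by rewrite hi => /eqP; rewrite subr_eq0 => /eqP.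
    move=> /hneg; rewrite hi => hneg'.
    have th := cchar_thom (hch i).
    have := eqi i; rewrite (thomB c' c th) => E.
    apply: (notclose (thom_circ _ th) hneg' (thom_circ c th)).
    by rewrite E; split; rewrite subrr normr0 ltr01.
  subst c'.
  have [n [_ hb]] := clusterSeq clc' (cont_close c hchi e0) 0.
  exact: (phiP n).2 hb.
exact: (HL hh sN sf sC).
Qed.
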